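(* Let $n,b$ be integers with $1<n<b$, let $C$ be an $(n,b)$-permutiple class, and let $G_C$ be its graph. The following statements are equivalent: (1) $\overline{G}_C$ is the graph of a permutiple class, i.e. there is an $(n,b)$-permutiple $q$ with $G_q=\overline{G}_C$; (2) the state $0$ is a vertex of $\overline{\Gamma}_C$; (3) the state $n-1$ is a vertex of $\Gamma_C$.
   Context: For digits $0\le d_j<b$, $(d_k,\ldots,d_0)_b$ denotes $\sum_{j=0}^k d_jb^j$ (leading zero digits allowed). For a permutation $\sigma$ of $\{0,\ldots,k\}$, $(d_k,\ldots,d_0)_b$ is an $(n,b,\sigma)$-permutiple if $(d_k,\ldots,d_0)_b=n\cdot(d_{\sigma(k)},\ldots,d_{\sigma(0)})_b$, and an $(n,b)$-permutiple if this holds for some $\sigma$. The graph $G_p$ of such a $p$ is the directed graph with vertex set $\{0,\ldots,b-1\}$ and edge set $\{(d_j,d_{\sigma(j)})\mid 0\le j\le k\}$. The class of an $(n,b)$-permutiple $p$ is the set $C$ of all $(n,b)$-permutiples $q$ with $G_q$ a subgraph of $G_p$; its graph is $G_C=G_p$. For a digit $d$ put $\overline d=b-1-d$, for a state $c\in\{0,\ldots,n-1\}$ put $\overline c=n-1-c$. The reflection $\overline{G}$ of a directed graph $G$ on $\{0,\ldots,b-1\}$ has the same vertices and edges $(\overline{d}_1,\overline{d}_2)$ for edges $(d_1,d_2)$ of $G$. Let $\lambda(x)$ be the least non-negative residue of $x$ mod $b$; the mother graph $M$ is the directed graph on $\{0,\ldots,b-1\}$ with edges the pairs $(d_1,d_2)$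 with $\lambda(d_1+(b-n)d_2)\le n-1$. The Hoey-Sloane graph $\Gamma$ is the edge-labelled directed graph on states $\{0,\ldots,n-1\}$ in which $(c_1,c_2)$ is an edge labelled by every edge $(d_1,d_2)$ of $M$ with $n d_2-d_1+c_1=bc_2$ (an edge exists iff there is at least one such label). The cycle image of a directed cycle $C_0$ of $M$ is the edge-labelled subgraph of $\Gamma$ with edges the $(c_1,c_2)$ for which $\{(d_1,d_2)\in C_0\mid n d_2-d_1+c_1=bc_2\}$ is nonempty, labelled by this set, and vertices the endpoints of these edges. $\Gamma_C$ is the union (of vertices, edges and labels) of the cycle images of the directed cycles of $M$ contained in $G_C$. The reflection $\overline{\Gamma}_C$ has vertices $\overline{c}$, edges $(\overline{c}_1,\overline{c}_2)$ and labels $(\overline{d}_1,\overline{d}_2)$ for the vertices $c$, edges $(c_1,c_2)$ and labels $(d_1,d_2)$ of $\Gamma_C$. *)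

(* Defs.v *)
From mathcomp Require Import all_boot all_order all_algebra all_fingroup.
Set Implicit Arguments. Unset Strict Implicit. Unset Printing Implicit Defensive.
Import GRing.Theory Num.Theory.

(* A digit string (d_k,...,d_0)_b is given by k and d : 'I_(k+1) -> nat,
   with d j the digit of weight b^j. *)
Definition digval (b k : nat) (d : 'I_k.+1 -> nat) : nat :=
  \sum_(j < k.+1) d j * b ^ j.

Definition permutiple (n b k : nat) (d : 'I_k.+1 -> nat) (s : {perm 'I_k.+1}) : Prop :=
  (forall j, d j < b) /\ digval b d = n * digval b (fun j => d (s j)).

(* Directed graphs on the vertex set {0,...,b-1} are given by their edge relation. *)
Definition graph_of (k : nat) (d : 'I_k.+1 -> nat) (s : {perm 'I_k.+1}) : nat -> nat -> Prop :=
  fun x y => exists j, x = d j /\ y = d (s j).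

Definition reflect_graph (b : nat) (G : nat -> nat -> Prop) : nat -> nat -> Prop :=
  fun x y => exists d1 d2, G d1 d2 /\ d1 < b /\ d2 < b /\ x = b.-1 - d1 /\ y = b.-1 - d2.

Definition mother (n b : nat) : rel nat :=
  fun d1 d2 => [&& d1 < b, d2 < b & (d1 + (b - n) * d2) %% b <= n.-1].

(* a directed cycle of the graph with edge relation e: a nonempty duplicate-free
   sequence of vertices [v0; ...; v_{m-1}] with edges v_i -> v_{i+1 mod m}
   (loops are cycles of length 1); its edges are (x, next c x) for x in c *)
Definition dcycle (e : rel nat) (c : seq nat) : Prop :=
  [/\ c != [::], uniq c & path.cycle e c].

Definition cycle_in (G : nat -> nat -> Prop) (c : seq nat) : Prop :=
  forall x, x \in c -> G x (next c x).

(* (c1,c2) is an edge of Gamma labelled (d1,d2) (condition on the label) *)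
Definition hs_label (n b d1 d2 c1 c2 : nat) : Prop :=
  [/\ c1 < n, c2 < n &
      ((n%:Z * d2%:Z - d1%:Z + c1%:Z)%R = (b%:Z * c2%:Z)%R)].

(* c is a vertex of Gamma_C, the union of the cycle images of the directed
   cycles of M contained in G *)
Definition GammaC_vertex (n b : nat) (G : nat -> nat -> Prop) (c : nat) : Prop :=
  exists c0, [/\ dcycle (mother n b) c0, cycle_in G c0 &
    exists d1 c1 c2, [/\ d1 \in c0, hs_label n b d1 (next c0 d1) c1 c2 &
                        (c = c1 \/ c = c2)]].

Definition reflGammaC_vertex (n b : nat) (G : nat -> nat -> Prop) (c : nat) : Prop :=
  exists c', GammaC_vertex n b G c' /\ c = n.-1 - c'.

(* Main.v *)
Require Import Defs.
From mathcomp Require Import all_boot all_order all_algebra all_fingroup.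
From mathcomp Require Import zify.
Set Implicit Arguments. Unset Strict Implicit. Unset Printing Implicit Defensive.

Definition S (b : nat) (H : nat -> nat) (m : nat) := \sum_(0 <= t < m) H t * b ^ t.

Lemma digvalS b k (d : 'I_k.+1 -> nat) : digval b d = S b (fun t => d (inord t)) k.+1.
Proof. by rewrite /digval /S big_mkord; apply: eq_bigr => j _; rewrite inord_val. Qed.

Lemma S_ext b H1 H2 m : (forall t, t < m -> H1 t = H2 t) -> S b H1 m = S b H2 m.
Proof. move=> h; apply: eq_big_nat => t /andP[_ ht]; by rewrite h. Qed.

Lemma S_split b H m i : i <= m ->
  S b H m = S b H i + b ^ i * S b (fun t => H (t + i)) (m - i).
Proof.
move=> hi; rewrite /S (big_cat_nat (leq0n i) hi) /=; congr (_ + _).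
rewrite -{1}(add0n i) big_addn big_distrr /=; apply: eq_bigr => t _.
rewrite expnD; lia.
Qed.

Lemma S_lt b H m : (forall t, t < m -> H t < b) -> S b H m < b ^ m.
Proof.
elim: m => [|m IH] h; first by rewrite /S big_geq.
rewrite /S big_nat_recr //= -/(S b H m) expnS.
have h1 := IH (fun t ht => h t (ltnW ht)).
have h2 : H m < b := h m (ltnSn m).
have : (H m).+1 * b ^ m <= b * b ^ m by rewrite leq_mul2r h2 orbT.
nia.
Qed.

Lemma S_refl b H m : (forall t, t < m -> H t < b) ->
  S b (fun t => b.-1 - H t) m + S b H m + 1 = b ^ m.
Proof.
elim: m => [|m IH] h; first by rewrite /S !big_geq.
rewrite /S !big_nat_recr //= -!/(S b _ m) expnS.
have h1 := IH (fun t ht => h t (ltnW ht)).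
have h2 : H m < b := h m (ltnSn m).
have e : b.-1 - H m + H m + 1 = b by lia.
have : (b.-1 - H m) * b ^ m + H m * b ^ m + b ^ m = b * b ^ m.
  by rewrite -{3}(mul1n (b ^ m)) -!mulnDl e.
lia.
Qed.

Lemma S_rot b H m i : i <= m ->
  S b (fun t => H ((t + i) %% m)) m =
  S b (fun t => H (t + i)) (m - i) + b ^ (m - i) * S b H i.
Proof.
move=> hi; rewrite (S_split _ _ (leq_subr i m)) subKn //; congr (_ + _ * _).
  apply: S_ext => t ht; rewrite modn_small //; lia.
apply: S_ext => t ht; rewrite -addnA subnK // modnDr modn_small //; lia.
Qed.

Definition Dd k (d : 'I_k.+1 -> nat) t := d (inord t).
Definition Ed k (d : 'I_k.+1 -> nat) (s : {perm 'I_k.+1}) t := d (s (inord t)).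
Definition carry n b k (d : 'I_k.+1 -> nat) (s : {perm 'I_k.+1}) i :=
  n * S b (Ed d s) i %/ b ^ i.

Lemma carry_eq n b k (d : 'I_k.+1 -> nat) s i : 0 < n -> 
  permutiple n b d s -> i <= k.+1 ->
  n * S b (Ed d s) i = carry n b d s i * b ^ i + S b (Dd d) i /\ carry n b d s i < n.
Proof.
move=> n0 [hd he] hi.
have b0 : 0 < b by have := hd ord0; lia.
have bi : 0 < b ^ i by rewrite expn_gt0 b0.
have hD : forall t, Dd d t < b by move=> t; apply: hd.
have hE : forall t, Ed d s t < b by move=> t; apply: hd.
have {}he : S b (Dd d) k.+1 = n * S b (Ed d s) k.+1 by rewrite !digvalS in he.
rewrite (S_split b (Dd d) hi) (S_split b (Ed d s) hi) in he.
have lP := S_lt (fun t _ => hD t) (m := i).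
have lQ := S_lt (fun t _ => hE t) (m := i).
set LP := S b (Dd d) i in he lP *; set LQ := S b (Ed d s) i in he lQ *.
set UP := S b _ (k.+1 - i) in he; set UQ := S b _ (k.+1 - i) in he.
have hm : LP = (n * LQ) %% b ^ i.
  have := congr1 (modn^~ (b ^ i)) he.
  have -> : n * (LQ + b ^ i * UQ) = (n * UQ) * b ^ i + n * LQ by lia.
  by rewrite modnMDl [LP + _]addnC [_ * UP]mulnC modnMDl (modn_small lP) => ->.
split; first by rewrite /carry hm -divn_eq.
by rewrite /carry ltn_divLR // ltn_mul2l n0.
Qed.

Lemma carry_step n b k (d : 'I_k.+1 -> nat) s j : 0 < n ->
  permutiple n b d s -> j < k.+1 ->
  carry n b d s j + n * Ed d s j = carry n b d s j.+1 * b + Dd d j.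
Proof.
move=> n0 hp hj.
have b0 : 0 < b by have := hp.1 ord0; lia.
have bi : 0 < b ^ j by rewrite expn_gt0 b0.
have [e1 _] := carry_eq n0 hp (ltnW hj).
have [e2 _] := carry_eq n0 hp hj.
move: e2; rewrite /S !big_nat_recr //= -!/(S b _ j) expnS mulnDr e1 => e2.
apply/eqP; rewrite -(eqn_pmul2r bi); apply/eqP; lia.
Qed.

Lemma carry0 n b k (d : 'I_k.+1 -> nat) s : carry n b d s 0 = 0.
Proof. by rewrite /carry /S big_geq // muln0 div0n. Qed.

Lemma mother_of n b d1 d2 c1 c2 : n < b -> c1 < n -> d1 < b -> d2 < b ->
  c1 + n * d2 = c2 * b + d1 -> mother n b d1 d2.
Proof.
move=> nb c1n d1b d2b e; rewrite /mother d1b d2b /=.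
have -> : d1 + (b - n) * d2 = c1 + d2 * b - c2 * b.
  have -> : (b - n) * d2 = b * d2 - n * d2 by rewrite mulnBl.
  nia.
have le : c2 * b <= d2 * b.
  rewrite leq_mul2r; apply/orP; right.
  have : c2 * b < d2.+1 * b.
    have : n * d2 <= b * d2 by rewrite leq_mul2r ltnW ?orbT.
    lia.
  by rewrite ltn_mul2r ltnS => /andP[].
rewrite -addnBA // -mulnBl addnC modnMDl modn_small; lia.
Qed.

Lemma hs_labelP n b d1 d2 c1 c2 :
  hs_label n b d1 d2 c1 c2 <-> [/\ c1 < n, c2 < n & c1 + n * d2 = c2 * b + d1].
Proof.
rewrite /hs_label; split => -[h1 h2 h3]; split => //; lia.
Qed.

Lemma edge_carry n b k (d : 'I_k.+1 -> nat) s (j : 'I_k.+1) : 0 < n ->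
  permutiple n b d s ->
  [/\ carry n b d s j < n, carry n b d s j.+1 < n &
      carry n b d s j + n * d (s j) = carry n b d s j.+1 * b + d j].
Proof.
move=> n0 hp.
have := carry_step n0 hp (ltn_ord j); rewrite /Ed /Dd inord_val => ->.
split=> //; [exact: (carry_eq n0 hp (ltnW (ltn_ord j))).2 | exact: (carry_eq n0 hp (ltn_ord j)).2].
Qed.

Definition gb k (d : 'I_k.+1 -> nat) (s : {perm 'I_k.+1}) : rel nat :=
  fun x y => [exists j0 : 'I_k.+1, (d j0 == x) && (d (s j0) == y)].

Lemma gbP k (d : 'I_k.+1 -> nat) s x y : reflect (graph_of d s x y) (gb d s x y).
Proof.
apply: (iffP existsP) => [[j /andP[/eqP <- /eqP <-]]|[j [-> ->]]]; first by exists j.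
by exists j; rewrite !eqxx.
Qed.

Lemma gb_mother n b k (d : 'I_k.+1 -> nat) s : 0 < n -> n < b ->
  permutiple n b d s -> subrel (gb d s) (mother n b).
Proof.
move=> n0 nb hp x y /gbP [j [-> ->]].
have [h1 _ h3] := edge_carry j n0 hp.
exact: mother_of nb h1 (hp.1 _) (hp.1 _) h3.
Qed.

Lemma walk k (d : 'I_k.+1 -> nat) s (j : 'I_k.+1) t :
  exists p, path (gb d s) (d (s j)) p /\ last (d (s j)) p = d ((s ^+ t.+1)%g j).
Proof.
elim: t => [|t [p [hp hl]]]; first by exists [::]; rewrite expg1.
exists (rcons p (d ((s ^+ t.+2)%g j))); rewrite rcons_path last_rcons hp hl; split=> //.
apply/gbP; exists ((s ^+ t.+1)%g j); split=> //.
by rewrite [in LHS]expgSr permM.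
Qed.

Lemma cycle_through n b k (d : 'I_k.+1 -> nat) s (j : 'I_k.+1) : 0 < n -> n < b ->
  permutiple n b d s ->
  exists c0, [/\ dcycle (mother n b) c0, cycle_in (graph_of d s) c0,
                 d j \in c0 & next c0 (d j) = d (s j)].
Proof.
move=> n0 nb hp.
have [p [hpa hl]] := walk d s j (#[s]%g).-1.
rewrite prednK ?order_gt0 // expg_order perm1 in hl.
set x := d j in hl *; set y := d (s j) in hpa hl *.
have gxy : gb d s x y by apply/gbP; exists j.
suff [c0 [ne u cy xc nx]] : exists c0, [/\ c0 != [::], uniq c0, path.cycle (gb d s) c0,
      x \in c0 & next c0 x = y].
  exists c0; split=> //; first (split=> //; move: cy; apply: sub_cycle; exact: (gb_mother n0 nb hp)).
  by move=> z zc; apply/gbP; exact: next_cycle cy zc.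
have [exy|nxy] := eqVneq x y.
  have gxx : gb d s x x by rewrite {2}exy.
  exists [:: x]; split=> //=; rewrite ?inE ?eqxx ?gxx //.
move: hl; case: (shortenP hpa) => p' hp' u _ hlast.
case/lastP: p' hp' u hlast => [|q z] hp' u hlast; first by rewrite /= in hlast; rewrite hlast eqxx in nxy.
rewrite last_rcons in hlast; subst z.
move: u; rewrite -rcons_cons rcons_uniq => /andP[xq uq].
exists [:: x, y & q]; split=> //.
- by rewrite /= xq.
- by rewrite /= gxy.
- by rewrite inE eqxx.
- by rewrite /next /= eqxx.
Qed.

Definition rotf k i (j : 'I_k.+1) : 'I_k.+1 := inord ((j + i) %% k.+1).

Lemma rotf_inj k i : injective (@rotf k i).
Proof.
move=> x y /(congr1 (@nat_of_ord _)); rewrite /rotf !inordK ?ltn_pmod // => /eqP.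
by rewrite eqn_modDr !modn_small // => /eqP /val_inj.
Qed.

Lemma reflect_rot n b k (d : 'I_k.+1 -> nat) s i : 1 < n -> n < b ->
  permutiple n b d s -> i <= k.+1 -> carry n b d s i = n.-1 ->
  exists (k' : nat) (d' : 'I_k'.+1 -> nat) (s' : {perm 'I_k'.+1}),
          permutiple n b d' s' /\
          forall x y, graph_of d' s' x y <-> reflect_graph b (graph_of d s) x y.
Proof.
move=> n1 nb hp hi hc.
have n0 : 0 < n by lia.
have b0 : 0 < b by lia.
pose rp := perm (@rotf_inj k i).
pose d' j := b.-1 - d (rp j).
pose s' := (rp * s * rp^-1)%g.
have ds' : forall j, d' (s' j) = b.-1 - d (s (rp j)).
  by move=> j; rewrite /d' /s' !permM permKV.
exists k, d', s'; split; last first.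
  move=> x y; split.
    case=> j [-> ->]; exists (d (rp j)), (d (s (rp j))); rewrite ds'.
    by repeat split; try exact: hp.1; exists (rp j).
  case=> d1 [d2 [[j [e1 e2]] [_ [_ [-> ->]]]]]; exists (rp^-1 j)%g.
  by rewrite ds' /d' permKV e1 e2.
split; first by move=> j; rewrite /d'; lia.
have hrp : forall t, t < k.+1 -> rp (inord t) = inord ((t + i) %% k.+1).
  by move=> t ht; rewrite permE /rotf inordK.
have hD : forall t, Dd d t < b by move=> t; apply: hp.1.
have hE : forall t, Ed d s t < b by move=> t; apply: hp.1.
rewrite !digvalS.
have -> : S b (fun t => d' (inord t)) k.+1 =
   S b (fun t => (fun u => b.-1 - Dd d u) ((t + i) %% k.+1)) k.+1.
  by apply: S_ext => t ht; rewrite /d' hrp.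
have -> : S b (fun t => d' (s' (inord t))) k.+1 =
   S b (fun t => (fun u => b.-1 - Ed d s u) ((t + i) %% k.+1)) k.+1.
  by apply: S_ext => t ht; rewrite ds' hrp.
rewrite (S_rot b (fun u => b.-1 - Dd d u) hi) (S_rot b (fun u => b.-1 - Ed d s u) hi).
have r1 : S b (fun t => b.-1 - Dd d (t + i)) (k.+1 - i) + S b (fun t => Dd d (t + i)) (k.+1 - i) + 1
   = b ^ (k.+1 - i) := S_refl (fun t _ => hD (t + i)).
have r2 : S b (fun t => b.-1 - Ed d s (t + i)) (k.+1 - i) + S b (fun t => Ed d s (t + i)) (k.+1 - i) + 1
   = b ^ (k.+1 - i) := S_refl (fun t _ => hE (t + i)).
have r3 : S b (fun t => b.-1 - Dd d t) i + S b (Dd d) i + 1 = b ^ i := S_refl (fun t _ => hD t).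
have r4 : S b (fun t => b.-1 - Ed d s t) i + S b (Ed d s) i + 1 = b ^ i := S_refl (fun t _ => hE t).
have [c1 _] := carry_eq n0 hp hi; rewrite hc in c1.
have he : S b (Dd d) k.+1 = n * S b (Ed d s) k.+1 by have := hp.2; rewrite !digvalS.
rewrite (S_split b (Dd d) hi) (S_split b (Ed d s) hi) in he.
set x := b ^ (k.+1 - i) in r1 r2 *; set y := b ^ i in r3 r4 c1 he *.
set UP' := S b (fun t => b.-1 - Dd d (t + i)) _ in r1 *.
set UQ' := S b (fun t => b.-1 - Ed d s (t + i)) _ in r2 *.
set LP' := S b (fun t => b.-1 - Dd d t) i in r3 *.
set LQ' := S b (fun t => b.-1 - Ed d s t) i in r4 *.
set UP := S b (fun t => Dd d (t + i)) _ in r1 he *.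
set UQ := S b (fun t => Ed d s (t + i)) _ in r2 he *.
set LP := S b (Dd d) i in r3 c1 he *.
set LQ := S b (Ed d s) i in r4 c1 he *.
have y0 : 0 < y by rewrite expn_gt0 b0.
have eU : UP + 1 = n * UQ + n.
  apply/eqP; rewrite -(eqn_pmul2r y0); apply/eqP.
  have : (n.-1 * y + LP) + y * (n * UQ) = LP + y * UP by rewrite he mulnDr c1; lia.
  nia.
have m1 : x * LP' + x * LP + x = x * y by rewrite -r3; lia.
have m2 : n * x * LQ' + n * x * LQ + n * x = n * x * y by rewrite -r4; lia.
have m3 : x * (n * LQ) + x * y = x * (n * y) + x * LP by rewrite c1; destruct n; lia.
have m4 : n * UQ' + n * UQ + n = n * x by rewrite -r2; lia.
nia.
Qed.

Lemma digval_mod b k (h : 'I_k.+1 -> nat) : digval b h = h ord0 %[mod b].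
Proof.
rewrite digvalS (S_split b _ (ltn0Sn k : 1 <= k.+1)) /S big_nat1 expn0 muln1 expn1.
have -> : inord 0 = ord0 :> 'I_k.+1 by apply: val_inj; rewrite /= inordK.
by rewrite addnC mulnC modnMDl.
Qed.

Lemma carry_uniq a1 a2 c1 c2 X Y n b : n < b -> a1 < n -> c1 < n ->
  a1 + X = a2 * b + Y -> c1 + X = c2 * b + Y -> a1 = c1 /\ a2 = c2.
Proof.
move=> nb ha hc e1 e2.
have : a2 = c2.
  case: (ltngtP a2 c2) => // h.
  - have : a2.+1 * b <= c2 * b by rewrite leq_mul2r h orbT.
    lia.
  - have : c2.+1 * b <= a2 * b by rewrite leq_mul2r h orbT.
    lia.
move=> e; split=> //; subst; lia.
Qed.

Theorem theorem15 (n b : nat) (hn : 1 < n) (hnb : n < b)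
  (k : nat) (d : 'I_k.+1 -> nat) (s : {perm 'I_k.+1})
  (hp : permutiple n b d s) :
  [<-> (exists (k' : nat) (d' : 'I_k'.+1 -> nat) (s' : {perm 'I_k'.+1}),
          permutiple n b d' s' /\
          forall x y, graph_of d' s' x y <-> reflect_graph b (graph_of d s) x y);
       reflGammaC_vertex n b (graph_of d s) 0;
       GammaC_vertex n b (graph_of d s) n.-1].
Proof.
have n0 : 0 < n by lia.
have b0 : 0 < b by lia.
tfae.
- move=> [k' [d' [s' [[hd' he'] hG]]]].
  exists n.-1; split; last by rewrite subnn.
  have hm : d' ord0 = (n * d' (s' ord0)) %% b.
    have := congr1 (modn^~ b) he'.
    rewrite digval_mod -modnMmr (digval_mod b (fun j => d' (s' j))) modnMmr.
    by rewrite (modn_small (hd' ord0)).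
  set x0 := d' ord0 in hm; set y0 := d' (s' ord0) in hm.
  have [d1 [d2 [hg [d1b [d2b [ex ey]]]]]] : reflect_graph b (graph_of d s) x0 y0.
    by apply/hG; exists ord0.
  have y0b : y0 < b by apply: hd'.
  set t := n * y0 %/ b.
  have et : n * y0 = t * b + x0 by rewrite hm -divn_eq.
  have tn : t < n by rewrite ltn_divLR // ltn_mul2l n0.
  have hl : hs_label n b d1 d2 n.-1 (n.-1 - t).
    apply/hs_labelP; split; try lia.
    have e1 : y0 + d2 + 1 = b by lia.
    have m1 : n * y0 + n * d2 + n = n * b by rewrite -[in RHS]e1; lia.
    have e2 : n.-1 - t + t + 1 = n by lia.
    have m2 : (n.-1 - t) * b + t * b + b = n * b by rewrite -[in RHS]e2; lia.
    lia.
  case: hg => j [e1 e2]; subst d1 d2.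
  have [c0 [dc ci jc nx]] := cycle_through j n0 hnb hp.
  exists c0; split=> //; exists (d j), n.-1, (n.-1 - t); split=> //; first by rewrite nx.
  by left.
- move=> [c' [hv e]].
  have -> : n.-1 = c'; last by [].
  case: hv => [c0 [_ _ [d1 [c1 [c2 [_ /hs_labelP[h1 h2 _] hc]]]]]].
  by case: hc => ?; subst; lia.
- case=> c0 [_ ci [d1 [c1 [c2 [d1c /hs_labelP[h1 h2 hl] hc]]]]].
  have [j [ej en]] := ci d1 d1c.
  rewrite en ej in hl.
  have [k1 k2 k3] := edge_carry j n0 hp.
  have [u1 u2] := carry_uniq hnb h1 k1 hl k3.
  case: hc => hc.
  + apply: (reflect_rot (i := j)) => //; [exact: ltnW | by rewrite -u1].
  + apply: (reflect_rot (i := j.+1)) => //; by rewrite -u2.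
Qed.
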